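(* Let $\lambda\in\Pi(\mu_1,\ldots,\mu_N)$ and let $\lambda_j=\pi_{\mathcal{P}_j}\#\lambda$ for $j\in\{1,\dots,N\}$. If $\lambda$ is an extreme point of $\Pi(\lambda_{N-1},\mu_N)$ and, for every $j\in\{2,\ldots,N-1\}$, $\lambda_j$ is an extreme point of $\Pi(\lambda_{j-1},\mu_j)$, then $\lambda$ is an extreme point of $\Pi(\mu_1,\ldots,\mu_N)$.
   Context: $N\ge3$; $\mu_k$ are Borel probability measures on complete separable metric spaces $X_k$, $k=1,\dots,N$. $\Pi(\mu_1,\ldots,\mu_N)$ is the convex set of Borel probability measures on $\prod_{k=1}^NX_k$ with $k$-th marginal $\mu_k$. For $j\in\{1,\dots,N\}$, $\pi_{\mathcal{P}_j}:\prod_{k=1}^NX_k\to\prod_{k=1}^jX_k$ is the projection onto the first $j$ coordinates (so $\lambda_1=\mu_1$, $\lambda_N=\lambda$). Writing $\prod_{k=1}^jX_k=Z_j\times X_j$ with $Z_j=\prod_{k=1}^{j-1}X_k$, $\Pi(\lambda_{j-1},\mu_j)$ denotes the set of Borel probability measures on $Z_j\times X_j$ with marginals $\lambda_{j-1}$ on $Z_j$ and $\mu_j$ on $X_j$. An extreme point of a convex set $K$ is a point not expressible as $t\alpha+(1-t)\beta$ with $\alpha\neq\beta$ in $K$, $t\in(0,1)$. *)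

(* Defs.v *)
From HB Require Import structures.
From mathcomp Require Import all_boot all_order all_algebra.
From mathcomp Require Import all_classical all_reals all_analysis.
Set Implicit Arguments. Unset Strict Implicit. Unset Printing Implicit Defensive.
Import Order.TTheory GRing.Theory Num.Theory.
Local Open Scope classical_set_scope.
Local Open Scope ring_scope.

(* Polish space: complete (pseudo)metric space that is Hausdorff (so the
   pseudometric is a metric) and separable. *)
Definition separable_space (T : ptopologicalType) : Prop :=
  exists D : set T, countable D /\ closure D = setT.

Definition polish_metric (R : realType) (X : completePseudoMetricType R) : Prop :=
  hausdorff_space X /\ separable_space X.

Notation borel T := (g_sigma_algebraType (@open T)).

(* The product of the first j spaces X 0, ..., X (j-1) (0-based indexing). *)
Definition prodn (T : nat -> ptopologicalType) (j : nat) :=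
  forall k : 'I_j, T k.

Definition prodn_gen (T : nat -> ptopologicalType) (j : nat)
  : set (set (prodn T j)) :=
  fun S => exists k : 'I_j, exists2 A : set (T k),
      (measurable : set (set (borel (T k)))) A &
      S = (fun x : prodn T j => x k) @^-1` A.

Notation Prodn T j := (g_sigma_algebraType (@prodn_gen T j)).

Definition coord (T : nat -> ptopologicalType) (j : nat) (k : 'I_j)
  : Prodn T j -> borel (T k) := fun x => x k.

Definition proj (T : nat -> ptopologicalType) (N j : nat) (h : (j <= N)%N)
  : Prodn T N -> Prodn T j := fun x k => x (widen_ord h k).

(* decomposition Prodn T j.+1 = Prodn T j * T j *)
Definition restr (T : nat -> ptopologicalType) (j : nat)
  : Prodn T j.+1 -> Prodn T j := fun x k => x (widen_ord (leqnSn j) k).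
Definition lastc (T : nat -> ptopologicalType) (j : nat)
  : Prodn T j.+1 -> borel (T j) := fun x => x ord_max.

Lemma proj_measurable (T : nat -> ptopologicalType) (N j : nat) (h : (j <= N)%N) :
  measurable_fun setT (@proj T N j h).
Proof.
apply: (@measurability _ _ (Prodn T N) (Prodn T j) setT (@proj T N j h)
  (@prodn_gen T j)); first by [].
move=> _ [_ [k [A mA ->]] <-].
apply: sub_sigma_algebra; exists (widen_ord h k); exists A => //.
by rewrite setTI.
Qed.

Section marginal.
Context (R : realType) (T : nat -> ptopologicalType) (N j : nat) (h : (j <= N)%N)
  (lam : probability (Prodn T N) R).

Definition marg : set (Prodn T j) -> \bar R := pushforward lam (@proj T N j h).

Local Open Scope ereal_scope.
Let mproj := @proj_measurable T N j h.

Let marg0 : marg set0 = 0.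
Proof. by rewrite /marg /pushforward preimage_set0 measure0. Qed.

Let marg_ge0 A : 0 <= marg A.
Proof. exact: measure_ge0. Qed.

Let marg_sigma_additive : semi_sigma_additive marg.
Proof.
move=> F mF tF mUF; rewrite /marg /pushforward preimage_bigcup.
apply: measure_semi_sigma_additive.
- by move=> n; rewrite -[X in measurable X]setTI; exact: mproj.
- apply/trivIsetP => /= i k _ _ ik; rewrite -preimage_setI.
  by move/trivIsetP : tF => /(_ _ _ _ _ ik) ->//; rewrite preimage_set0.
- by rewrite -preimage_bigcup -[X in measurable X]setTI; exact: mproj.
Qed.

HB.instance Definition _ := isMeasure.Build _ _ _
  marg marg0 marg_ge0 marg_sigma_additive.

Let marg_setT : marg setT = 1.
Proof. by rewrite /marg /pushforward preimage_setT probability_setT. Qed.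

HB.instance Definition _ := Measure_isProbability.Build _ _ _ marg marg_setT.
End marginal.

Local Open Scope ereal_scope.

Definition meq d (T : measurableType d) (R : realType)
  (m1 m2 : set T -> \bar R) : Prop :=
  forall A, measurable A -> m1 A = m2 A.

Definition extreme_point d (T : measurableType d) (R : realType)
  (K : set (probability T R)) (x : probability T R) : Prop :=
  K x /\
  forall (a b : probability T R) (t : R), K a -> K b -> (0 < t < 1)%R ->
    meq x (fun A => t%:E * a A + (1 - t)%:E * b A) -> meq a b.

Definition Pi_multi (R : realType) (T : nat -> ptopologicalType)
  (mu : forall k : nat, probability (borel (T k)) R) (N : nat)
  : set (probability (Prodn T N) R) :=
  fun nu => forall k : 'I_N, meq (pushforward nu (@coord T N k)) (mu k).

Definition Pi_two (R : realType) (T : nat -> ptopologicalType) (j : nat)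
  (rho : probability (Prodn T j) R) (m : probability (borel (T j)) R)
  : set (probability (Prodn T j.+1) R) :=
  fun nu => meq (pushforward nu (@restr T j)) rho /\
            meq (pushforward nu (@lastc T j)) m.

Definition ptop_fam (R : realType) (X : nat -> completePseudoMetricType R)
  : nat -> ptopologicalType := fun k => X k.

(* Main.v *)
Require Import Defs.
From HB Require Import structures.
From mathcomp Require Import all_boot all_order all_algebra.
From mathcomp Require Import all_classical all_reals all_analysis.
Set Implicit Arguments. Unset Strict Implicit. Unset Printing Implicit Defensive.
Import Order.TTheory GRing.Theory Num.Theory.
Local Open Scope classical_set_scope.
Local Open Scope ring_scope.

Section helpers.
Context (T : nat -> ptopologicalType).

Lemma restr_projE N j (h1 : (j.+1 <= N)%N) (h2 : (j <= N)%N) (A : set (Prodn T j)) :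
  @Defs.proj T N j.+1 h1 @^-1` (@Defs.restr T j @^-1` A) = @Defs.proj T N j h2 @^-1` A.
Proof.
apply: funext => x /=; rewrite /preimage /=; congr A.
apply: functional_extensionality_dep => k.
rewrite /Defs.restr /Defs.proj /widen_ord /=. case: k => k hk /=. have E : forall p q : (k < N)%N, x (Ordinal p) = x (Ordinal q) by move=> p q; rewrite (bool_irrelevance p q). exact: E.
Qed.

Lemma lastc_projE N j (h1 : (j.+1 <= N)%N) (A : set (borel (T j))) :
  @Defs.proj T N j.+1 h1 @^-1` (@Defs.lastc T j @^-1` A) = @Defs.coord T N (Ordinal h1) @^-1` A.
Proof.
apply: funext => x /=; rewrite /preimage /=; congr A.
rewrite /Defs.lastc /Defs.proj /Defs.coord /widen_ord /=. have E : forall p q : (j < N)%N, x (Ordinal p) = x (Ordinal q) by move=> p q; rewrite (bool_irrelevance p q). exact: E.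
Qed.

Lemma prod1_meas (S : set (Prodn T 1)) : measurable S ->
  exists2 A : set (borel (T 0)), measurable A &
    S = (fun x : Prodn T 1 => x ord0) @^-1` A.
Proof.
move=> mS.
have : preimage_set_system setT (fun x : Prodn T 1 => (x ord0 : borel (T 0)))
   measurable S.
  apply: (smallest_sub _ _ mS).
    exact: sigma_algebra_preimage (sigma_algebra_measurable _).
  move=> _ [[[|//] hk] [A mA ->]]; exists A => //.
  by rewrite setTI (bool_irrelevance hk (ltn0Sn 0)).
by case=> B mB <-; exists B => //; rewrite setTI.
Qed.
End helpers.

Local Open Scope ereal_scope.

Lemma convE (R : realType) (t : R) (x : \bar R) : (0 < t < 1)%R ->
  t%:E * x + (1 - t)%:E * x = x.
Proof.
case/andP => t0 t1.
rewrite -ge0_muleDl ?lee_fin ?subr_ge0 ?(ltW t0) ?(ltW t1) //.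
by rewrite -EFinD addrC subrK mul1e.
Qed.

Lemma proj1E (T : nat -> ptopologicalType) N (h : (1 <= N)%N) (B : set (borel (T 0%N))) :
  @Defs.proj T N 1 h @^-1` ((fun x : Prodn T 1 => x ord0) @^-1` B) =
  @Defs.coord T N (Ordinal h) @^-1` B.
Proof.
apply: funext => x /=; rewrite /preimage /=; congr B.
rewrite /Defs.proj /Defs.coord /widen_ord /=.
have E : forall p q : (0 < N)%N, x (Ordinal p) = x (Ordinal q) by move=> p q; rewrite (bool_irrelevance p q).
exact: E.
Qed.

Theorem mainTheorem3 (R : realType) (X : nat -> completePseudoMetricType R)
  (n : nat) (hn : (2 <= n)%N)
  (hX : forall k : nat, (k < n.+1)%N -> polish_metric (X k))
  (mu : forall k : nat, probability (borel (ptop_fam X k)) R)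
  (lam : probability (Prodn (ptop_fam X) n.+1) R)
  (hlam : @Pi_multi R (ptop_fam X) mu n.+1 lam)
  (hlast : extreme_point
             (@Pi_two R (ptop_fam X) n
                (@marg R (ptop_fam X) n.+1 n (leqnSn n) lam) (mu n)) lam)
  (hmid : forall (j : nat) (hj : (j.+1 <= n)%N), (1 <= j)%N ->
      extreme_point
        (@Pi_two R (ptop_fam X) j
           (@marg R (ptop_fam X) n.+1 j (ltnW (leqW hj)) lam) (mu j))
        (@marg R (ptop_fam X) n.+1 j.+1 (leqW hj) lam)) :
  extreme_point (@Pi_multi R (ptop_fam X) mu n.+1) lam.
Proof.
split => // a b t Pa Pb t01 Hab.

have key : forall j (h : (j <= n.+1)%N) A, measurable A ->
    @marg R (ptop_fam X) n.+1 j h lam A = t%:E * @marg R (ptop_fam X) n.+1 j h a A + (1 - t)%:E * @marg R (ptop_fam X) n.+1 j h b A.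
  move=> j h A mA; rewrite /marg /pushforward; apply: Hab.
  by rewrite -[X in measurable X]setTI; exact: proj_measurable.
have P : forall j, (1 <= j <= n)%N -> forall h : (j <= n.+1)%N,
    meq (@marg R (ptop_fam X) n.+1 j h a) (@marg R (ptop_fam X) n.+1 j h b).
  elim=> [//|j IH] /andP[_ hj] h.
  have [j0|jpos] := eqVneq j 0%N.
    subst j => A mA; have [B mB ->] := prod1_meas mA.
    rewrite /marg /pushforward !proj1E.
    have Ea := Pa (Ordinal h) B mB; have Eb := Pb (Ordinal h) B mB.
    rewrite /pushforward in Ea Eb; by rewrite Ea Eb.
  have j1 : (1 <= j)%N by rewrite lt0n.
  have IHj := IH (introT andP (conj j1 (ltnW hj))).
  have [_ ext] := hmid j hj j1.
  have Hmeq : meq (@marg R (ptop_fam X) n.+1 j.+1 (leqW hj) a) (@marg R (ptop_fam X) n.+1 j.+1 (leqW hj) b).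
    have PiT : forall c : probability (Prodn (ptop_fam X) n.+1) R, Pi_multi mu c ->
        meq (@marg R (ptop_fam X) n.+1 j (ltnW (leqW hj)) c) (@marg R (ptop_fam X) n.+1 j (ltnW (leqW hj)) a) ->
      Pi_two (@marg R (ptop_fam X) n.+1 j (ltnW (leqW hj)) lam) (mu j) (@marg R (ptop_fam X) n.+1 j.+1 (leqW hj) c).
      move=> c Pc Ec; split.
      + move=> A mA; apply: (eq_trans _ (esym (key _ _ A mA))); rewrite -(IHj _ A mA) convE // -(Ec A mA).
        rewrite /pushforward /marg /pushforward /=; congr (c _); exact: restr_projE.
      + move=> A mA; rewrite /pushforward /marg /pushforward /=; rewrite -(Pc (Ordinal (leqW hj)) A mA); congr (c _); exact: lastc_projE.
    apply: (ext _ _ t) => //.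
    - by apply: PiT.
    - by apply: PiT => // A mA; rewrite (IHj _ A mA).
    - by move=> A mA; exact: key.
  by rewrite (bool_irrelevance h (leqW hj)).
have Pn := P n (introT andP (conj (ltnW hn) (leqnn n))) (leqnSn n).
have [_ ext] := hlast.
apply: (ext _ _ t) => //.
- split.
  + move=> A mA; apply: (eq_trans _ (esym (key _ _ A mA))); rewrite -(Pn A mA) convE //; rewrite /pushforward /marg /pushforward /=.
  + move=> A mA; exact: (Pa ord_max A mA).
- split.
  + move=> A mA; apply: (eq_trans _ (esym (key _ _ A mA))); rewrite -(Pn A mA) convE // (Pn A mA); rewrite /pushforward /marg /pushforward /=; reflexivity.
  + move=> A mA; exact: (Pb ord_max A mA).
Qed.
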